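(* Let $k$ be an algebraically closed field, let $A$ be a local Noetherian $k$-algebra with residue field $k$, and let $M$ be a finitely generated $A$-module. Then $M$ is free if and only if for every integer $n > 0$ and every ideal $I_n \subset A$ of colength $n$, $$\frac{\dim_k (M \otimes_A A/I_n)}{n} = \dim_k (M \otimes_A k).$$
   Context: An ideal $I \subset A$ is said to be of colength $n$ if $A/I$ is an Artinian $k$-algebra with $\dim_k A/I = n$. *)

(* Defs.v *)
From HB Require Import structures.
From mathcomp Require Import all_boot all_order all_algebra.
Set Implicit Arguments. Unset Strict Implicit. Unset Printing Implicit Defensive.
Import GRing.Theory.
Local Open Scope ring_scope.

Section Defs.
Variable k : fieldType.
Variable A : comAlgType k.

Definition is_ideal (I : A -> Prop) : Prop :=
  [/\ I 0, (forall x y, I x -> I y -> I (x + y)) & (forall a x, I x -> I (a * x))].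

Definition ideal_sub (I J : A -> Prop) : Prop := forall x, I x -> J x.

Definition noetherian : Prop :=
  forall I : A -> Prop, is_ideal I ->
    exists (n : nat) (g : 'I_n -> A),
      (forall i, I (g i)) /\
      (forall x, I x -> exists c : 'I_n -> A, x = \sum_(i < n) c i * g i).

(* m is the maximal ideal of the local ring A (the unique maximal ideal:
   it is proper and contains every proper ideal), with residue field k,
   i.e. the structure map k -> A/m is surjective (it is automatically
   injective). *)
Definition local_with_residue_field (m : A -> Prop) : Prop :=
  [/\ is_ideal m, ~ m 1,
      (forall J, is_ideal J -> ~ J 1 -> ideal_sub J m)
    & (forall a : A, exists c : k, m (a - c%:A))].

(* A/I is Artinian: DCC on ideals of A containing I *)
Definition quotient_artinian (I : A -> Prop) : Prop :=
  forall J : nat -> (A -> Prop),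
    (forall n, [/\ is_ideal (J n), ideal_sub I (J n) & ideal_sub (J n.+1) (J n)]) ->
    exists N, forall n, (N <= n)%N -> forall x, J n x <-> J N x.

(* dim_k (V / N) = d, for a k-subspace N of a k-vector space V whose
   k-scalar multiplication is s *)
Definition qdim (V : zmodType) (s : k -> V -> V) (N : V -> Prop) (d : nat) : Prop :=
  exists v : 'I_d -> V,
    (forall x, exists c : 'I_d -> k, N (x - \sum_(i < d) s (c i) (v i))) /\
    (forall c : 'I_d -> k, N (\sum_(i < d) s (c i) (v i)) -> forall i, c i = 0).

Definition colength (I : A -> Prop) (n : nat) : Prop :=
  [/\ is_ideal I, quotient_artinian I & qdim (fun c (a : A) => c *: a) I n].

Variable M : lmodType A.

Definition kscale (c : k) (x : M) : M := c%:A *: x.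

Definition idealM (I : A -> Prop) (x : M) : Prop :=
  exists (n : nat) (a : 'I_n -> A) (y : 'I_n -> M),
    (forall i, I (a i)) /\ x = \sum_(i < n) a i *: y i.

(* dim_k (M ⊗_A A/I) = d, using M ⊗_A A/I = M / I M *)
Definition tensor_dim (I : A -> Prop) (d : nat) : Prop := qdim kscale (idealM I) d.

Definition fin_gen_module : Prop :=
  exists (n : nat) (g : 'I_n -> M),
    forall x, exists c : 'I_n -> A, x = \sum_(i < n) c i *: g i.

Definition free_module : Prop :=
  exists (J : eqType) (e : J -> M),
    (forall x, exists (s : seq J) (c : J -> A), x = \sum_(j <- s) c j *: e j) /\
    (forall (s : seq J) (c : J -> A), uniq s ->
       \sum_(j <- s) c j *: e j = 0 -> forall j, j \in s -> c j = 0).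

End Defs.

(* Main.v *)
Require Import Defs.
From HB Require Import structures.
From mathcomp Require Import all_boot all_order all_algebra.
From mathcomp Require Import boolp zify.
Set Implicit Arguments. Unset Strict Implicit. Unset Printing Implicit Defensive.
Import GRing.Theory.
Local Open Scope ring_scope.

Lemma sum_option (V : zmodType) (T : finType) (F : option T -> V) :
  \sum_o F o = F None + \sum_t F (Some t).
Proof.
rewrite (bigD1 None) //=; congr (_ + _).
rewrite (reindex_omap Some id) /=; last by case.
by apply: eq_bigl => t; rewrite eqxx.
Qed.

Lemma exists_max (P : nat -> Prop) n0 B :
  P n0 -> (forall n, P n -> (n <= B)%N) -> exists n, P n /\ forall m, P m -> (m <= n)%N.
Proof.
move=> h0 hB.
have ex : exists i, `[< P i >] by exists n0; apply/asboolP.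
have ub : forall i, `[< P i >] -> (i <= B)%N by move=> i /asboolP; apply: hB.
case: (ex_maxnP ex ub) => i /asboolP hi hmax.
by exists i; split=> // m hm; apply: hmax; apply/asboolP.
Qed.

Record linset (k : fieldType) (V : zmodType) (s : k -> V -> V) (N : V -> Prop) : Prop :=
  LinSet {
  ls_N0 : N 0;
  ls_ND : forall x y, N x -> N y -> N (x + y);
  ls_NS : forall c x, N x -> N (s c x);
  ls_sD : forall c x y, s c (x + y) = s c x + s c y;
  ls_sDl : forall c d x, s (c + d) x = s c x + s d x;
  ls_sM : forall c d x, s c (s d x) = s (c * d) x;
  ls_s1 : forall x, s 1 x = x }.

Section LinAlg.
Variable k : fieldType.
Variable V : zmodType.
Variable s : k -> V -> V.
Variable N : V -> Prop.
Hypothesis L : linset s N.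
Let N0 := ls_N0 L.
Let ND := ls_ND L.
Let NS := ls_NS L.
Let sD := ls_sD L.
Let sDl := ls_sDl L.
Let sM := ls_sM L.
Let s1 := ls_s1 L.

Lemma s0v x : s 0 x = 0.
Proof. by apply: (addrI (s 0 x)); rewrite addr0 -sDl addr0. Qed.
Lemma sv0 c : s c 0 = 0.
Proof. by apply: (addrI (s c 0)); rewrite addr0 -sD addr0. Qed.
Lemma sN c x : s c (- x) = - s c x.
Proof. by apply/eqP; rewrite -subr_eq0 opprK -sD addNr sv0. Qed.
Lemma sNl c x : s (- c) x = - s c x.
Proof. by apply/eqP; rewrite -subr_eq0 opprK -sDl addNr s0v. Qed.
Lemma sB c x y : s c (x - y) = s c x - s c y.
Proof. by rewrite sD sN. Qed.
Lemma NN x : N x -> N (- x).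
Proof. by move=> h; rewrite -[x]s1 -sNl; apply: NS. Qed.
Lemma NB x y : N x -> N y -> N (x - y).
Proof. by move=> hx hy; apply: ND => //; apply: NN. Qed.
Lemma Nsum (T : Type) (r : seq T) (P : pred T) (F : T -> V) :
  (forall i, P i -> N (F i)) -> N (\sum_(i <- r | P i) F i).
Proof. by move=> h; elim/big_ind: _ => //; apply: ND. Qed.
Lemma s_sum (T : Type) (r : seq T) (P : pred T) (F : T -> V) c :
  s c (\sum_(i <- r | P i) F i) = \sum_(i <- r | P i) s c (F i).
Proof. exact: (big_morph (s c) (sD c) (sv0 c)). Qed.
Lemma sum_s (T : Type) (r : seq T) (P : pred T) (F : T -> k) x :
  s (\sum_(i <- r | P i) F i) x = \sum_(i <- r | P i) s (F i) x.
Proof. exact: (big_morph (fun c => s c x) (fun c d => sDl c d x) (s0v x)). Qed.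

Definition lc (T : finType) (c : T -> k) (w : T -> V) := \sum_i s (c i) (w i).
Definition indep (T : finType) (w : T -> V) :=
  forall c, N (lc c w) -> forall i, c i = 0.
Definition inspan (T : finType) (w : T -> V) x := exists c, N (x - lc c w).
Definition spans (T : finType) (w : T -> V) := forall x, inspan w x.

Lemma lc_compose (P Q : finType) (w : P -> V) (u : Q -> V) (a : P -> Q -> k) c :
  (forall j, N (w j - lc (a j) u)) ->
  N (lc c w - lc (fun l => \sum_j c j * a j l) u).
Proof.
move=> h.
have -> : lc (fun l => \sum_j c j * a j l) u = \sum_j s (c j) (lc (a j) u).
  rewrite /lc; under eq_bigr do rewrite sum_s.
  rewrite exchange_big /=; apply: eq_bigr => j _.
  by rewrite s_sum; apply: eq_bigr => l _; rewrite sM.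
rewrite /lc -sumrB; apply: Nsum => j _; rewrite -sB; apply: NS; exact: h.
Qed.

Lemma inspan_trans (P Q : finType) (w : P -> V) (u : Q -> V) x :
  inspan w x -> (forall j, inspan u (w j)) -> inspan u x.
Proof.
move=> [c hc] hw; have [a ha] := choice hw.
exists (fun l => \sum_j c j * a j l).
have := lc_compose c ha => h2.
have -> : x - lc (fun l => \sum_j c j * a j l) u =
  (x - lc c w) + (lc c w - lc (fun l => \sum_j c j * a j l) u).
  by rewrite addrA addrNK.
exact: ND.
Qed.

Lemma steinitz (P Q : finType) (w : P -> V) (u : Q -> V) :
  indep w -> (forall j, inspan u (w j)) -> (#|P| <= #|Q|)%N.
Proof.
move=> hind hw; have [a ha] := choice hw.
rewrite leqNgt; apply/negP => hlt.
pose Am : 'M[k]_(#|P|, #|Q|) := \matrix_(i, j) a (enum_val i) (enum_val j).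
have hK : kermx Am != 0.
  rewrite kermx_eq0 /row_free; apply/negP => /eqP hr.
  have := rank_leq_col Am; rewrite hr => h2.
  by move: (leq_trans hlt h2); rewrite ltnn.
have [i0 hi0] : exists i, row i (kermx Am) != 0.
  apply/existsP; apply: contraR hK => /existsPn hall.
  apply/eqP/row_matrixP => i; rewrite row0; exact/eqP/negbNE/hall.
pose b := row i0 (kermx Am).
have hb : b *m Am = 0 by rewrite /b -row_mul mulmx_ker row0.
pose c := fun j => b 0 (enum_rank j).
have hc : N (lc c w).
  have := lc_compose c ha.
  have -> : lc (fun l => \sum_j c j * a j l) u = 0.
    rewrite /lc big1 // => l _.
    have -> : \sum_j c j * a j l = (b *m Am) 0 (enum_rank l).
      rewrite mxE (reindex (@enum_rank P)) /=; last first.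
        by exists enum_val => x _; rewrite ?enum_valK ?enum_rankK.
      by apply: eq_bigr => j _; rewrite /c /b !mxE !enum_rankK.
    by rewrite hb mxE s0v.
  by rewrite subr0.
case/negP: hi0; apply/eqP; apply/rowP => j.
have := hind c hc (enum_val j); rewrite /c enum_valK /b !mxE. done.
Qed.

Lemma lc_option (T : finType) (c : option T -> k) w :
  lc c w = s (c None) (w None) + lc (fun t => c (Some t)) (fun t => w (Some t)).
Proof. exact: sum_option. Qed.

Definition ext (T : finType) (w : T -> V) x : option T -> V :=
  fun o => if o is Some t then w t else x.

Lemma indep_ext (T : finType) (w : T -> V) x :
  indep w -> ~ inspan w x -> indep (ext w x).
Proof.
move=> hw hx c hc.
have hN : c None = 0.
  apply/eqP; apply/negPn/negP => hn; apply: hx.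
  exists (fun t => - (c None)^-1 * c (Some t)).
  have -> : x - lc (fun t => - (c None)^-1 * c (Some t)) w = s (c None)^-1 (lc c (ext w x)).
    rewrite lc_option /= sD sM mulVf // s1; congr (_ + _).
    rewrite /lc s_sum -sumrN; apply: eq_bigr => t _ /=.
    by rewrite sM mulNr sNl opprK.
  by apply: NS.
have hS : forall t, c (Some t) = 0.
  by apply: hw; move: hc; rewrite lc_option /= hN s0v add0r.
by case => [t|] //; apply: hS.
Qed.

Lemma lc_reindex (T : finType) (c : 'I_#|T| -> k) (w : T -> V) :
  lc c (fun i => w (enum_val i)) = lc (fun t => c (enum_rank t)) w.
Proof.
rewrite /lc (reindex (@enum_rank T)) /=; last first.
  by exists enum_val => x _; rewrite ?enum_valK ?enum_rankK.
by apply: eq_bigr => t _; rewrite enum_rankK.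
Qed.

Lemma indep_transport (T : finType) (w : T -> V) :
  indep w -> indep (fun i : 'I_#|T| => w (enum_val i)).
Proof.
move=> hw c hc i; rewrite lc_reindex in hc.
by have := hw _ hc (enum_val i); rewrite enum_valK.
Qed.

Lemma inspan_transport (T : finType) (w : T -> V) x :
  inspan w x -> inspan (fun i : 'I_#|T| => w (enum_val i)) x.
Proof.
move=> [c hc]; exists (fun i => c (enum_val i)); rewrite lc_reindex.
by rewrite /lc; under eq_bigr do rewrite enum_rankK.
Qed.

Lemma indep0 (v : 'I_0 -> V) : indep v.
Proof. by move=> c _ []. Qed.

Lemma exists_basis (Q : finType) (u : Q -> V) :
  spans u -> exists d (v : 'I_d -> V), spans v /\ indep v.
Proof.
move=> hu.
pose P := fun n => exists v : 'I_n -> V, indep v.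
have P0 : P 0%N by exists (fun _ => 0); apply: indep0.
have hB : forall n, P n -> (n <= #|Q|)%N.
  move=> n [v hv]; have := steinitz hv (fun j => hu (v j)); by rewrite card_ord.
have [p [[v hv] hmax]] := exists_max P0 hB.
exists p, v; split=> // x.
have [h|h] := pselect (inspan v x) => //.
have hi := indep_transport (indep_ext hv h).
have : P #|{: option (ordinal p)}| by exact: (ex_intro _ _ hi).
rewrite card_option card_ord => /hmax; by rewrite ltnn.
Qed.

Lemma dim_unique d d' (v : 'I_d -> V) (v' : 'I_d' -> V) :
  spans v -> indep v -> spans v' -> indep v' -> d = d'.
Proof.
move=> sv iv sv' iv'; apply/eqP; rewrite eqn_leq.
have := steinitz iv (fun j => sv' (v j)); have := steinitz iv' (fun j => sv (v' j)).
by rewrite !card_ord => -> ->.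
Qed.

Lemma lc_delta (T : finType) (w : T -> V) t :
  lc (fun t' => (t' == t)%:R) w = w t.
Proof.
rewrite /lc (bigD1 t) //= eqxx s1 big1 ?addr0 // => t' /negbTE ->.
by rewrite s0v.
Qed.

Lemma inspan_self (T : finType) (w : T -> V) t : inspan w (w t).
Proof. by exists (fun t' => (t' == t)%:R); rewrite lc_delta subrr. Qed.

Lemma dim_lt (Q : finType) (u : Q -> V) (c : Q -> k) j0 d (v : 'I_d -> V) :
  spans u -> N (lc c u) -> c j0 != 0 -> indep v -> (d < #|Q|)%N.
Proof.
move=> su hc hj0 iv.
pose u' := fun t : {x in predC1 j0} => u (val t).
have hsp : forall j, inspan u' (u j).
  move=> j; have [->|hj] := eqVneq j j0; last first.
    have hj' : j \in predC1 j0 by [].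
    exact: (inspan_self u' (exist _ j hj')).
  exists (fun t => - c (val t) / c j0).
  have -> : u j0 - lc (fun t => - c (val t) / c j0) u' = s (c j0)^-1 (lc c u).
    rewrite /lc (bigD1 j0) //= sD sM mulVf // s1; congr (_ + _).
    rewrite (big_sub (predC1 j0)) /= s_sum -sumrN; apply: eq_bigr => t _.
    by rewrite /u' sM mulNr sNl opprK mulrC.
  by apply: NS.
have := steinitz iv (fun i => inspan_trans (su (v i)) hsp).
rewrite card_ord card_sig => h.
have e : #|[pred x in predC1 j0]| = #|Q|.-1 by rewrite -(cardC1 j0); apply: eq_card.
rewrite e in h; apply: (leq_ltn_trans h).
have : (0 < #|Q|)%N by apply/card_gt0P; exists j0.
by case: #|Q|.
Qed.

Lemma dcc (Q : finType) (u : Q -> V) (J : nat -> V -> Prop) :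
  spans u ->
  (forall n, [/\ forall x y, J n x -> J n y -> J n (x + y),
     forall c x, J n x -> J n (s c x),
     forall x, N x -> J n x & forall x, J n.+1 x -> J n x]) ->
  exists M, forall n, (M <= n)%N -> forall x, J n x <-> J M x.
Proof.
move=> su hJ.
have Jsum : forall n (w : 'I_n -> V) c m, (forall i, J m (w i)) -> J m (lc c w).
  move=> n w c m hw; have [JD JS JN _] := hJ m.
  rewrite /lc; apply: (big_ind (J m)); [exact: JN N0 | exact: JD | move=> i _; apply: JS; exact: hw].
have Jmono : forall a b, (a <= b)%N -> forall x, J b x -> J a x.
  move=> a b; elim: b => [|b IH] hab x hx.
    by move: hab; rewrite leqn0 => /eqP ->.
  move: hab; rewrite leq_eqVlt => /orP [/eqP -> //|hab].
  by apply: IH => //; have [_ _ _ h] := hJ b; apply: h.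
pose Pn := fun n p => exists w : 'I_p -> V, indep w /\ forall i, J n (w i).
have hmax : forall n, exists p, Pn n p /\ forall q, Pn n q -> (q <= p)%N.
  move=> n; apply: (@exists_max (Pn n) 0 #|Q|).
    by exists (fun _ => 0); split; [apply: indep0 | case].
  move=> q [w [iw _]]; have := steinitz iw (fun j => su (w j)); by rewrite card_ord.
have [g hg] := choice hmax.
have gdec : forall m n, (m <= n)%N -> (g n <= g m)%N.
  move=> m n hmn; have [[w [iw Jw]] _] := hg n; apply: (hg m).2.
  by exists w; split=> // i; apply: Jmono hmn _ (Jw i).
have exv : exists v, `[< exists n, g n = v >] by exists (g 0%N); apply/asboolP; exists 0%N.
case: (ex_minnP exv) => v /asboolP [M hM] hmin.
exists M => n hn x; split; first exact: Jmono.
move=> hx; apply: contrapT => hnx.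
have [[w [iw Jw]] _] := hg n.
have hs : ~ inspan w x.
  move=> [c hc]; apply: hnx; have [JD _ JN _] := hJ n.
  by rewrite -(subrK (lc c w) x); apply: JD; [apply: JN | apply: Jsum].
have hi := indep_transport (indep_ext iw hs).
have hP : Pn M #|{: option (ordinal (g n))}|.
  exists (fun i => ext w x (enum_val i)); split; first exact: hi.
  move=> i; rewrite /ext; case: (enum_val i) => [j|] //.
  exact: Jmono hn _ (Jw j).
have := (hg M).2 _ hP; rewrite card_option card_ord hM => h.
have : (v <= g n)%N by apply: hmin; apply/asboolP; exists n.
by rewrite leqNgt h.
Qed.

End LinAlg.


Definition catf (T : Type) m n (f : 'I_m -> T) (g : 'I_n -> T) (i : 'I_(m + n)) : T :=
  match split i with inl j => f j | inr j => g j end.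
Lemma catf_l (T : Type) m n (f : 'I_m -> T) (g : 'I_n -> T) j : catf f g (lshift n j) = f j.
Proof. by rewrite /catf; have := unsplitK (inl _ j); rewrite /= => ->. Qed.
Lemma catf_r (T : Type) m n (f : 'I_m -> T) (g : 'I_n -> T) j : catf f g (rshift m j) = g j.
Proof. by rewrite /catf; have := unsplitK (inr _ j); rewrite /= => ->. Qed.
Lemma catf_all (T : Type) m n (f : 'I_m -> T) (g : 'I_n -> T) (P : T -> Prop) :
  (forall i, P (f i)) -> (forall i, P (g i)) -> forall i, P (catf f g i).
Proof. by move=> hf hg i; rewrite /catf; case: (split i). Qed.

Section Ring.
Variable k : fieldType.
Variable A : comAlgType k.
Implicit Types I J : A -> Prop.

Lemma algE (c : k) (a : A) : c *: a = c%:A * a.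
Proof. by rewrite mulr_algl. Qed.

Lemma ideal_scale I : is_ideal I -> forall c x, I x -> I (c *: x).
Proof. by case=> _ _ hM c x hx; rewrite algE; apply: hM. Qed.
Lemma ideal_mulr I : is_ideal I -> forall a x, I x -> I (x * a).
Proof. by case=> _ _ hM a x hx; rewrite mulrC; apply: hM. Qed.
Lemma ideal_opp I : is_ideal I -> forall x, I x -> I (- x).
Proof. by case=> _ _ hM x hx; rewrite -mulN1r; apply: hM. Qed.
Lemma ideal_subr I : is_ideal I -> forall x y, I x -> I y -> I (x - y).
Proof. move=> hI x y hx hy; have [_ hD _] := hI; apply: hD => //; exact: ideal_opp. Qed.
Lemma ideal_sum I : is_ideal I -> forall (T : Type) (r : seq T) (P : pred T) (F : T -> A),
  (forall i, P i -> I (F i)) -> I (\sum_(i <- r | P i) F i).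
Proof. by case=> h0 hD _ T r P F hF; apply: big_ind. Qed.

Lemma linset_ideal I : is_ideal I -> linset (fun c (a : A) => c *: a) I.
Proof.
move=> hI; split.
- by case: hI.
- by case: hI.
- exact: ideal_scale.
- by move=> c x y; rewrite scalerDr.
- by move=> c d x; rewrite scalerDl.
- by move=> c d x; rewrite scalerA.
- by move=> x; rewrite scale1r.
Qed.

Variable M : lmodType A.

Lemma kscaleE (c : k) (x : M) : kscale c x = c%:A *: x.
Proof. by []. Qed.

Lemma idealM0 I : idealM I (0 : M).
Proof. by exists 0%N, (fun _ => 0), (fun _ => 0); split; [case | rewrite big_ord0]. Qed.

Lemma idealMD I (x y : M) : idealM I x -> idealM I y -> idealM I (x + y).
Proof.
move=> [n1 [a1 [y1 [h1 ->]]]] [n2 [a2 [y2 [h2 ->]]]].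
exists (n1 + n2)%N, (catf a1 a2), (catf y1 y2); split; first exact: catf_all.
by rewrite big_split_ord /=; congr (_ + _); apply: eq_bigr => i _;
  rewrite ?catf_l ?catf_r.
Qed.

Lemma idealM_scale I (a : A) (x : M) : idealM I x -> idealM I (a *: x).
Proof.
move=> [n [b [y [hb ->]]]]; exists n, b, (fun i => a *: y i); split=> //.
rewrite scaler_sumr; apply: eq_bigr => i _; by rewrite !scalerA mulrC.
Qed.

Lemma idealM_gen I (a : A) (x : M) : I a -> idealM I (a *: x).
Proof.
move=> ha; exists 1%N, (fun _ => a), (fun _ => x); split=> //.
by rewrite big_ord1.
Qed.

Lemma idealM_sum I (T : Type) (r : seq T) (P : pred T) (F : T -> M) :
  (forall i, P i -> idealM I (F i)) -> idealM I (\sum_(i <- r | P i) F i).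
Proof. move=> h; apply: big_ind => //; [exact: idealM0 | exact: idealMD]. Qed.

Lemma linset_M I : linset (@kscale k A M) (idealM I).
Proof.
split.
- exact: idealM0.
- exact: idealMD.
- by move=> c x hx; apply: idealM_scale.
- by move=> c x y; rewrite /kscale scalerDr.
- by move=> c d x; rewrite /kscale scalerDl scalerDl.
- by move=> c d x; rewrite /kscale scalerA -scalerAl mul1r scalerA.
- by move=> x; rewrite /kscale scale1r scale1r.
Qed.

End Ring.

Section Nak.
Variable k : fieldType.
Variable A : comAlgType k.
Variable m : A -> Prop.
Hypothesis hm : local_with_residue_field m.

Lemma m_ideal : is_ideal m.
Proof. by case: hm. Qed.

Lemma local_unit b : m b -> exists u, u * (1 - b) = 1.
Proof.
move=> hb.
pose J := fun x : A => exists a, x = a * (1 - b).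
have hJ : is_ideal J.
  split.
  - by exists 0; rewrite mul0r.
  - by move=> x y [a ->] [a' ->]; exists (a + a'); rewrite mulrDl.
  - by move=> a x [a' ->]; exists (a * a'); rewrite mulrA.
have [[u hu]|hn] := pselect (J 1); first by exists u.
case: hm => mI hm1 hmax _; exfalso; apply: hm1.
have h1 : m (1 - b) by apply: (hmax J hJ hn); exists 1; rewrite mul1r.
have := (let: And3 _ hD _ := mI in hD) _ _ h1 hb; by rewrite subrK.
Qed.

Lemma nakayama (V : lmodType A) (S P : V -> Prop) :
  S 0 -> (forall x y, S x -> S y -> S (x + y)) -> (forall a x, S x -> S (a *: x)) ->
  forall q (h : 'I_q -> V),
  (forall j, P (h j)) ->
  (forall x, P x -> exists s (c : 'I_q -> A), S s /\ x = s + \sum_j c j *: h j) ->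
  (forall x, P x -> exists s n (a : 'I_n -> A) (y : 'I_n -> V),
      [/\ S s, forall i, m (a i), forall i, P (y i) & x = s + \sum_i a i *: y i]) ->
  forall x, P x -> S x.
Proof.
move=> S0 SD SS.
have Ssum : forall (T : Type) (r : seq T) (F : T -> V), (forall i, S (F i)) -> S (\sum_(i <- r) F i).
  by move=> T r F hF; apply: big_ind.
elim=> [|q IH] h hP hspan hrad x hx.
  by have [s [c [hs ->]]] := hspan x hx; rewrite big_ord0 addr0.
pose hq := h ord_max.
pose h' := fun j : 'I_q => h (widen_ord (leqnSn q) j).
have [s' [be [hs' hbe heq]]] : exists s' (be : 'I_q.+1 -> A),
    [/\ S s', forall j, m (be j) & hq = s' + \sum_j be j *: h j].
  have [s [n [a [y [hs ha hy hqe]]]]] := hrad hq (hP _).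
  have [ys hys] := choice (fun i => hspan (y i) (hy i)).
  have [b hb] := choice (fun i => hys i).
  exists (s + \sum_i a i *: ys i), (fun j => \sum_i a i * b i j); split.
  - by apply: SD => //; apply: Ssum => i; apply: SS; case: (hb i).
  - move=> j; apply: (ideal_sum m_ideal) => i _; apply: (ideal_mulr m_ideal); exact: ha.
  rewrite hqe -addrA; congr (_ + _).
  have -> : \sum_i a i *: y i = \sum_i (a i *: ys i + \sum_j (a i * b i j) *: h j).
    apply: eq_bigr => i _; case: (hb i) => _ ->.
    by rewrite scalerDr scaler_sumr; congr (_ + _); apply: eq_bigr => j _; rewrite scalerA.
  rewrite big_split /=; congr (_ + _); rewrite exchange_big /=.
  by apply: eq_bigr => j _; rewrite scaler_suml.
have [u hu] := local_unit (hbe ord_max).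
have hq_eq : hq = u *: s' + \sum_(j < q) (u * be (widen_ord (leqnSn q) j)) *: h' j.
  have e1 : s' + \sum_(j < q) be (widen_ord (leqnSn q) j) *: h' j = (1 - be ord_max) *: hq.
    move: heq; rewrite big_ord_recr /= addrA => heq.
    by rewrite scalerBl scale1r {1}heq addrK.
  under eq_bigr do rewrite -scalerA.
  by rewrite -scaler_sumr -scalerDr e1 scalerA hu scale1r.
apply: (IH h') => //.
- by move=> j; apply: hP.
- move=> y hy; have [s [c [hs ->]]] := hspan y hy.
  exists (s + (c ord_max * u) *: s'),
    (fun j => c (widen_ord (leqnSn q) j) + c ord_max * (u * be (widen_ord (leqnSn q) j))).
  split; first by apply: SD => //; apply: SS.
  rewrite big_ord_recr /= -/hq hq_eq scalerDr scaler_sumr scalerA.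
  rewrite -!addrA; congr (_ + _); rewrite addrCA; congr (_ + _).
  rewrite -big_split; apply: eq_bigr => j _ /=.
  by rewrite scalerDl scalerA.
Qed.

End Nak.


Section Pow.
Variable k : fieldType.
Variable A : comAlgType k.
Implicit Types I J : A -> Prop.

Definition prodI I J (x : A) : Prop :=
  exists n (a b : 'I_n -> A), [/\ forall i, I (a i), forall i, J (b i) & x = \sum_i a i * b i].

Fixpoint Pow I (n : nat) : A -> Prop :=
  if n is n'.+1 then prodI I (Pow I n') else fun _ => True.

Lemma prodI_ideal I J : is_ideal J -> is_ideal (prodI I J).
Proof.
move=> hJ; split.
- by exists 0%N, (fun _ => 0), (fun _ => 0); split; [case | case | rewrite big_ord0].
- move=> x y [n1 [a1 [b1 [ha1 hb1 ->]]]] [n2 [a2 [b2 [ha2 hb2 ->]]]].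
  exists (n1 + n2)%N, (catf a1 a2), (catf b1 b2); split; try exact: catf_all.
  by rewrite big_split_ord /=; congr (_ + _); apply: eq_bigr => i _;
    rewrite ?catf_l ?catf_r.
- move=> c x [n [a [b [ha hb ->]]]]; exists n, a, (fun i => c * b i); split=> //.
    by move=> i; have [_ _ hM] := hJ; apply: hM.
  rewrite mulr_sumr; apply: eq_bigr => i _; by rewrite mulrCA.
Qed.

Lemma prodI_subr I J : is_ideal J -> forall x, prodI I J x -> J x.
Proof.
move=> hJ x [n [a [b [ha hb ->]]]]; apply: (ideal_sum hJ) => i _.
by have [_ _ hM] := hJ; apply: hM.
Qed.

Lemma prodI_subl I J : is_ideal I -> forall x, prodI I J x -> I x.
Proof.
move=> hI x [n [a [b [ha hb ->]]]]; apply: (ideal_sum hI) => i _.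
exact: ideal_mulr.
Qed.

Lemma prodI_mono I I' J J' : (forall x, I x -> I' x) -> (forall x, J x -> J' x) ->
  forall x, prodI I J x -> prodI I' J' x.
Proof.
move=> hI hJ x [n [a [b [ha hb ->]]]]; exists n, a, b; split=> // i.
exact: hI. exact: hJ.
Qed.

Lemma prodI_gen I J a b : I a -> J b -> prodI I J (a * b).
Proof.
by move=> ha hb; exists 1%N, (fun _ => a), (fun _ => b); split=> //; rewrite big_ord1.
Qed.

Lemma Pow_ideal I n : is_ideal (Pow I n).
Proof.
elim: n => [|n IH] /=; last exact: prodI_ideal.
by split.
Qed.

Lemma Pow_S I n x : Pow I n.+1 x -> Pow I n x.
Proof. exact: (prodI_subr (Pow_ideal I n)). Qed.

Lemma Pow_le I n p : (n <= p)%N -> forall x, Pow I p x -> Pow I n x.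
Proof.
move=> hnp; elim: p hnp => [|p IH] hnp x hx.
  by move: hnp; rewrite leqn0 => /eqP ->.
move: hnp; rewrite leq_eqVlt => /orP [/eqP -> //|hnp].
by apply: IH => //; apply: Pow_S.
Qed.

Lemma Pow_mono I I' n : (forall x, I x -> I' x) -> forall x, Pow I n x -> Pow I' n x.
Proof.
move=> hI; elim: n => [|n IH] x //=; apply: prodI_mono => //.
Qed.

Definition gen (e : nat) (g : 'I_e -> A) (x : A) := exists b : 'I_e -> A, x = \sum_i b i * g i.

Lemma gen_ideal e (g : 'I_e -> A) : is_ideal (gen g).
Proof.
split.
- by exists (fun _ => 0); rewrite big1 // => i _; rewrite mul0r.
- move=> x y [b ->] [b' ->]; exists (fun i => b i + b' i).
  by rewrite -big_split; apply: eq_bigr => i _; rewrite mulrDl.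
- move=> c x [b ->]; exists (fun i => c * b i).
  by rewrite mulr_sumr; apply: eq_bigr => i _; rewrite mulrA.
Qed.

Definition addP J (a : A) (x : A) := exists j b, J j /\ x = j + a * b.

Definition Bset J (a : A) (n : nat) (x : A) :=
  exists y : 'I_n.+1 -> A, (forall i : 'I_n.+1, Pow J (n - i) (y i)) /\
     x = \sum_(i < n.+1) a ^+ i * y i.

Lemma Bset0 J a n : Bset J a n 0.
Proof.
exists (fun _ => 0); split; last by rewrite big1 // => i _; rewrite mulr0.
move=> i; have [h0 _ _] := Pow_ideal J (n - i); exact: h0.
Qed.

Lemma BsetD J a n x y : Bset J a n x -> Bset J a n y -> Bset J a n (x + y).
Proof.
move=> [y1 [h1 ->]] [y2 [h2 ->]]; exists (fun i => y1 i + y2 i); split.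
  by move=> i; have [_ hD _] := Pow_ideal J (n - i); apply: hD.
by rewrite -big_split; apply: eq_bigr => i _; rewrite mulrDr.
Qed.

Lemma Bset_mulJ J a n j z : J j -> Bset J a n z -> Bset J a n.+1 (j * z).
Proof.
move=> hj [y [hy ->]].
exists (fun i : 'I_n.+2 => if (i <= n)%N then j * y (inord i) else 0); split.
  move=> i; case: ifP => hi.
    rewrite subSn // /=; apply: prodI_gen => //.
    by have := hy (inord i); rewrite inordK.
  by have [h0 _ _] := Pow_ideal J (n.+1 - i); apply: h0.
rewrite [RHS]big_ord_recr /= ltnn mulr0 addr0 mulr_sumr; apply: eq_bigr => i _ /=.
rewrite -ltnS ltn_ord.
have -> : inord (widen_ord (leqnSn n.+1) i) = i by apply: val_inj; rewrite /= inordK.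
by rewrite mulrCA.
Qed.

Lemma Bset_mula J a n b z : Bset J a n z -> Bset J a n.+1 (a * b * z).
Proof.
move=> [y [hy ->]].
exists (fun i : 'I_n.+2 => if nat_of_ord i is i''.+1 then b * y (inord i'') else 0); split.
  move=> [[|i] hi] /=.
    by have [h0 _ _] := Pow_ideal J n.+1; apply: h0.
  have [_ _ hM] := Pow_ideal J (n - i); apply: hM.
  by have := hy (inord i); rewrite inordK.
rewrite [RHS]big_ord_recl /= mulr0 add0r mulr_sumr; apply: eq_bigr => i _ /=.
rewrite /bump /= add0n.
have -> : inord i = i by apply: val_inj; rewrite /= inordK.
by rewrite exprS -!mulrA; congr (_ * _); rewrite mulrCA.
Qed.

Lemma Pow_Bset J a n x : is_ideal J -> Pow (addP J a) n x -> Bset J a n x.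
Proof.
move=> hJ; elim: n x => [|n IH] x /=.
  move=> _; exists (fun _ => x); split; first by move=> i; rewrite sub0n.
  by rewrite big_ord1 /= expr0 mul1r.
move=> [p [c [z [hc hz ->]]]].
apply: (big_ind (Bset J a n.+1)); [exact: Bset0 | exact: BsetD |] => i _.
have [j [b [hj ->]]] := hc i.
rewrite mulrDl; apply: BsetD; first by apply: Bset_mulJ => //; apply: IH.
exact: (Bset_mula b (IH _ (hz i))).
Qed.

Lemma Bset_split J a p s x : is_ideal J -> Bset J a (p + s) x ->
  exists y b, Pow J p y /\ x = y + a ^+ s * b.
Proof.
move=> hJ [y [hy ->]].
exists (\sum_(i < (p + s).+1) (if (i < s)%N then a ^+ i * y i else 0)),
       (\sum_(i < (p + s).+1) (if (i < s)%N then 0 else a ^+ (i - s) * y i)); split.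
  apply: (ideal_sum (Pow_ideal J p)) => i _; case: ifP => hi.
    have [_ _ hM] := Pow_ideal J p; apply: hM.
    by apply: (Pow_le _ (hy i)); lia.
  by have [h0 _ _] := Pow_ideal J p.
rewrite mulr_sumr -big_split; apply: eq_bigr => i _ /=.
case: ifP => hi; first by rewrite mulr0 addr0.
by rewrite add0r mulrA -exprD subnKC // leqNgt hi.
Qed.

Lemma nilpotent (s : nat) (Q : A -> Prop) : is_ideal Q ->
  forall e (g : 'I_e -> A), (forall i, Q (g i ^+ s)) ->
  forall x, Pow (gen g) (e * s + 1) x -> Q x.
Proof.
move=> hQ; elim=> [|e IH] g hg x.
  rewrite mul0n /= => /(prodI_subl (gen_ideal g)) [b ->].
  by rewrite big_ord0; case: hQ.
pose g' := fun i : 'I_e => g (widen_ord (leqnSn e) i).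
pose a := g ord_max.
have hsub : forall y, gen g y -> addP (gen g') a y.
  move=> y [b ->]; rewrite big_ord_recr /=.
  by exists (\sum_(i < e) b (widen_ord (leqnSn e) i) * g' i), (b ord_max); split;
    [exists (fun i => b (widen_ord (leqnSn e) i)) | rewrite mulrC].
have -> : (e.+1 * s + 1 = (e * s + 1) + s)%N by rewrite mulSn; lia.
move=> /(Pow_mono hsub) /(Pow_Bset (gen_ideal g')) /(Bset_split (gen_ideal g')).
move=> [y [b [hy ->]]]; have [_ hD hM] := hQ; apply: hD.
  by apply: (IH g') => // i; apply: hg.
by rewrite mulrC; apply: hM; apply: hg.
Qed.

End Pow.


Definition addE (k : fieldType) (A : comAlgType k) (Q : A -> Prop) (a : A) :=
  fun x => exists q b, Q q /\ x = q + b * a.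

Section Noeth.
Variable k : fieldType.
Variable A : comAlgType k.
Variable m : A -> Prop.
Hypothesis hm : local_with_residue_field m.
Hypothesis hN : noetherian A.

Lemma acc (C : nat -> A -> Prop) : (forall n, is_ideal (C n)) ->
  (forall n x, C n x -> C n.+1 x) ->
  exists N, forall n, (N <= n)%N -> forall x, C n x -> C N x.
Proof.
move=> hC hS.
have mono : forall a b, (a <= b)%N -> forall x, C a x -> C b x.
  move=> a b; elim: b => [|b IH] hab x hx.
    by move: hab hx; rewrite leqn0 => /eqP ->.
  move: hab; rewrite leq_eqVlt => /orP [/eqP <- //|hab].
  by apply: hS; apply: IH.
pose U := fun x => exists n, C n x.
have hU : is_ideal U.
  split.
  - by exists 0%N; case: (hC 0%N).
  - move=> x y [a hx] [b hy]; exists (maxn a b); have [_ hD _] := hC (maxn a b).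
    by apply: hD; [apply: mono (leq_maxl a b) _ hx | apply: mono (leq_maxr a b) _ hy].
  - by move=> c x [a hx]; exists a; have [_ _ hM] := hC a; apply: hM.
have [p [g [hg hgen]]] := hN hU.
have [nf hnf] := choice hg.
exists (\max_i nf i) => n hn x hx.
have [c ->] := hgen x (ex_intro _ n hx).
apply: (ideal_sum (hC _)) => i _; have [_ _ hM] := hC (\max_i nf i); apply: hM.
by apply: mono (hnf i); apply: leq_bigmax.
Qed.

Lemma maximal (F : (A -> Prop) -> Prop) J0 : F J0 -> (forall J, F J -> is_ideal J) ->
  exists J, F J /\ forall J', F J' -> ideal_sub J J' -> ideal_sub J' J.
Proof.
move=> h0 hI; apply: contrapT => hno.
have step : forall J, exists J', F J -> [/\ F J', ideal_sub J J' & ~ ideal_sub J' J].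
  move=> J; have [hF|hF] := pselect (F J); last by exists J.
  apply: contrapT => h; apply: hno; exists J; split=> // J' hJ' hsub.
  by apply: contrapT => hns; apply: h; exists J'.
have [nx hnx] := choice step.
pose C := fun n => iter n nx J0.
have hC : forall n, F (C n) by elim => //= n IH; case: (hnx _ IH).
have [N hN'] := acc (fun n => hI _ (hC n)) (fun n x => (let: And3 _ h _ := hnx _ (hC n) in h x)).
have [_ _ hns] := hnx _ (hC N); apply: hns => x; exact: hN' (leqnSn N) x.
Qed.

Lemma m_not1 : ~ m 1.
Proof. by case: hm. Qed.

Section Qsec.
Variable c : A.
Hypothesis hc : c != 0.

Lemma Q_exists : exists Q, [/\ is_ideal Q, ~ Q c &
  forall J, is_ideal J -> ideal_sub Q J -> ~ J c -> ideal_sub J Q].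
Proof.
pose F := fun J : A -> Prop => is_ideal J /\ ~ J c.
have F0 : F (fun x => x = 0).
  split; last by move=> h; move: hc; rewrite h eqxx.
  split=> //; [by move=> x y -> ->; rewrite addr0 | by move=> a x ->; rewrite mulr0].
have [Q [[hQ hQc] hmax]] := maximal F0 (fun J h => h.1).
by exists Q; split=> // J hJ hsub hJc; apply: hmax.
Qed.

Variable Q : A -> Prop.
Hypothesis hQ : is_ideal Q.
Hypothesis hQc : ~ Q c.
Hypothesis hQmax : forall J, is_ideal J -> ideal_sub Q J -> ~ J c -> ideal_sub J Q.


Lemma addE_ideal a : is_ideal (addE Q a).
Proof.
have [h0 hD hM] := hQ; split.
- by exists 0, 0; rewrite mul0r addr0.
- move=> x y [q [b [hq ->]]] [q' [b' [hq' ->]]]; exists (q + q'), (b + b'); split.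
    exact: hD.
  by rewrite mulrDl addrACA.
- move=> a' x [q [b [hq ->]]]; exists (a' * q), (a' * b); split; first exact: hM.
  by rewrite mulrDr mulrA.
Qed.

Lemma addE_c a : ~ Q a -> addE Q a c.
Proof.
move=> hna; apply: contrapT => hn; apply: hna.
have hs : ideal_sub Q (addE Q a) by move=> q hq; exists q, 0; rewrite mul0r addr0.
have h := hQmax (addE_ideal a) hs hn.
by apply: h; exists 0, 1; rewrite mul1r add0r; split=> //; case: hQ.
Qed.
Lemma Q_mc x : m x -> Q (x * c).
Proof.
move=> hx; apply: contrapT => hn; apply: hQc.
have [q [b [hq hcq]]] := addE_c hn.
have hbx : m (b * x) by have [_ _ hM] := m_ideal hm; apply: hM.
have [u hu] := local_unit hm hbx.
have eq : q = (1 - b * x) * c by rewrite mulrBl mul1r -mulrA {1}hcq addrK.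
have -> : c = u * q by rewrite eq mulrA hu mul1r.
by have [_ _ hM] := hQ; apply: hM.
Qed.

Lemma Q_pow x : m x -> exists s, Q (x ^+ s).
Proof.
move=> hx.
pose C := fun n b => Q (x ^+ n * b).
have hC : forall n, is_ideal (C n).
  move=> n; have [h0 hD hM] := hQ; split.
  - by rewrite /C mulr0.
  - by move=> a b ha hb; rewrite /C mulrDr; apply: hD.
  - by move=> a b hb; rewrite /C mulrCA; apply: hM.
have hS : forall n b, C n b -> C n.+1 b.
  by move=> n b hb; rewrite /C exprS -mulrA; have [_ _ hM] := hQ; apply: hM.
have [N hNC] := acc hC hS.
exists N; apply: contrapT => hn; apply: hQc.
have [q [b [hq hcq]]] := addE_c hn.
have hxc := Q_mc hx.
have hb1 : C N.+1 b.
  rewrite /C; have -> : x ^+ N.+1 * b = x * c - x * q by rewrite hcq mulrDr addrC addKr exprS -mulrA [b * _]mulrC.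
  apply: (ideal_subr hQ); first exact: hxc.
  by have [_ _ hM] := hQ; apply: hM.
have hb := hNC N.+1 (leqnSn N) b hb1.
by rewrite hcq; have [_ hD _] := hQ; apply: hD => //; rewrite mulrC; exact: hb.
Qed.

Lemma Q_Pow : exists t, ideal_sub (Pow m t) Q.
Proof.
have [e [g [hgm hgen]]] := hN (m_ideal hm).
have [sf hsf] := choice (fun i => Q_pow (hgm i)).
pose s := (\max_i sf i)%N.
have hg : forall i, Q (g i ^+ s).
  move=> i; rewrite /s -(subnKC (leq_bigmax (F:=sf) i)) exprD.
  by apply: ideal_mulr.
exists (e * s + 1)%N => x hx.
apply: (nilpotent hQ hg).
by apply: (Pow_mono _ hx) => y hy; apply: hgen.
Qed.

End Qsec.

Lemma span_Pow t : exists (T : finType) (w : T -> A),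
  spans (fun c (a : A) => c *: a) (Pow m t) w.
Proof.
elim: t => [|t [T [w hw]]].
  by exists 'I_0, (fun _ => 0) => x; exists (fun _ => 0).
have [L [h [hh hgen]]] := hN (Pow_ideal m t).
pose u := fun o : (T + 'I_L)%type => match o with inl i => w i | inr j => h j end.
exists (T + 'I_L)%type, u => x.
have [ka hka] := hw x.
have [b hb] := hgen _ hka.
have [ka' hka'] := choice (fun j => (let: And4 _ _ _ hr := hm in hr) (b j)).
exists (fun o => match o with inl i => ka i | inr j => ka' j end).
have -> : lc (fun c (a : A) => c *: a) (fun o => match o with inl i => ka i | inr j => ka' j end) u
   = lc (fun c (a : A) => c *: a) ka w + \sum_j ka' j *: h j.
  by rewrite /lc big_sumType.
rewrite opprD addrA hb -sumrB.
exists L, (fun j => b j - (ka' j)%:A), h; split=> //.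
by apply: eq_bigr => j _; rewrite mulrBl algE.
Qed.

Lemma colength_of (Q : A -> Prop) t : is_ideal Q -> ideal_sub (Pow m t) Q -> ~ Q 1 ->
  exists n, (0 < n)%N /\ colength Q n.
Proof.
move=> hQ hsub hQ1.
have [T [w hw]] := span_Pow t.
have hwQ : spans (fun c (a : A) => c *: a) Q w.
  by move=> x; have [c hc] := hw x; exists c; apply: hsub.
have L := linset_ideal hQ.
have [d [v [sv iv]]] := exists_basis L hwQ.
exists d; split.
  case: d v sv iv => // v sv _; exfalso; apply: hQ1.
  by have [c hc] := sv 1; move: hc; rewrite /lc big_ord0 subr0.
split=> //; last by exists v; split.
move=> J hJ; apply: (dcc L hwQ) => n; have [hJi hsQ hdesc] := hJ n.
have [_ hD _] := hJi; split=> //.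
by move=> c x hx; apply: ideal_scale.
Qed.
End Noeth.


Section Tensor.
Variable k : fieldType.
Variable A : comAlgType k.
Variable M : lmodType A.
Local Notation aS := (fun c (a : A) => c *: a).

Lemma lc_tensor (n R : nat) (w : 'I_n -> A) (b : 'I_R -> M) (coef : 'I_n * 'I_R -> k) :
  lc (@kscale k A M) coef (fun p => w p.1 *: b p.2)
  = \sum_i (lc aS (fun a => coef (a, i)) w) *: b i.
Proof.
rewrite /lc.
have -> : \sum_(p : 'I_n * 'I_R) kscale (coef p) (w p.1 *: b p.2) =
   \sum_a \sum_i kscale (coef (a, i)) (w a *: b i).
  by rewrite pair_big; apply: eq_bigr => -[a i] _.
rewrite exchange_big /=; apply: eq_bigr => i _.
rewrite scaler_suml; apply: eq_bigr => a _.
by rewrite /kscale scalerA algE.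
Qed.

Lemma tensor_spans (I : A -> Prop) (n R : nat) (w : 'I_n -> A) (b : 'I_R -> M) :
  (forall x : M, exists c, x = \sum_i c i *: b i) -> spans aS I w ->
  spans (@kscale k A M) (idealM I) (fun p => w p.1 *: b p.2).
Proof.
move=> hb hw x; have [c ->] := hb x.
have [ka hka] := choice (fun i => hw (c i)).
exists (fun p => ka p.2 p.1); rewrite lc_tensor -sumrB.
apply: idealM_sum => i _; rewrite -scalerBl; exact: idealM_gen.
Qed.

Lemma tensor_indep (I : A -> Prop) (n R : nat) (w : 'I_n -> A) (b : 'I_R -> M) :
  (forall x : M, exists c, x = \sum_i c i *: b i) ->
  (forall c, \sum_i c i *: b i = 0 -> forall i, c i = 0) ->
  is_ideal I -> indep aS I w ->
  indep (@kscale k A M) (idealM I) (fun p => w p.1 *: b p.2).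
Proof.
move=> hb hbi hI hw coef; rewrite lc_tensor => -[l [a [y [ha hy]]]].
have [be hbe] := choice (fun j => hb (y j)).
have hz : forall i, lc aS (fun a => coef (a, i)) w = \sum_j a j * be j i.
  move=> i; apply/eqP; rewrite -subr_eq0; apply/eqP.
  apply: (hbi (fun i => lc aS (fun a => coef (a, i)) w - \sum_j a j * be j i)).
  under eq_bigr do rewrite scalerBl.
  rewrite sumrB hy; apply/eqP; rewrite subr_eq0; apply/eqP.
  under eq_bigr do rewrite hbe scaler_sumr.
  rewrite exchange_big /=; apply: eq_bigr => i' _.
  by rewrite scaler_suml; apply: eq_bigr => j _; rewrite scalerA.
move=> [a0 i0].
have := hw (fun a => coef (a, i0)); rewrite hz => h; apply: h.
by apply: (ideal_sum hI) => j _; apply: (ideal_mulr hI).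
Qed.

End Tensor.

Lemma sum_count (J : eqType) (V : zmodType) (S s : seq J) (F : J -> V) :
  uniq S -> {subset s <= S} -> \sum_(j <- s) F j = \sum_(j <- S) F j *+ count_mem j s.
Proof.
move=> hS; elim: s => [|x s IH] hsub.
  by rewrite big_nil big1 // => j _; rewrite mulr0n.
rewrite big_cons IH; last by move=> j hj; apply: hsub; rewrite inE hj orbT.
under [RHS]eq_bigr do rewrite /= mulrnDr.
rewrite big_split /=; congr (_ + _).
rewrite (bigD1_seq x) //=; last by apply: hsub; rewrite inE eqxx.
rewrite eqxx mulr1n big1 ?addr0 // => j hj.
by rewrite eq_sym (negbTE hj) mulr0n.
Qed.

Section Mod.
Variable k : fieldType.
Variable A : comAlgType k.
Variable M : lmodType A.
Local Notation aS := (fun c (a : A) => c *: a).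

Lemma free_fin : free_module M -> fin_gen_module M ->
  exists R (b : 'I_R -> M), (forall x, exists c, x = \sum_i c i *: b i) /\
    (forall c, \sum_i c i *: b i = 0 -> forall i, c i = 0).
Proof.
move=> [J [e [hsp hind]]] [p [g hg]].
have [sf hsf] := choice (fun i => hsp (g i)).
have [cf hcf] := choice hsf.
pose S := undup (flatten (map sf (enum 'I_p))).
have hSu : uniq S := undup_uniq _.
have hSin : forall i j, j \in sf i -> j \in S.
  move=> i j hj; rewrite mem_undup; apply/flattenP; exists (sf i) => //.
  by apply: map_f; rewrite mem_enum.
pose t := in_tuple S.
exists (size S), (fun l => e (tnth t l)); split.
  move=> x; have [c ->] := hg x.
  exists (fun l => \sum_i (c i * cf i (tnth t l)) *+ count_mem (tnth t l) (sf i)).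
  have -> : \sum_i c i *: g i =
      \sum_(j <- S) (\sum_i (c i * cf i j) *+ count_mem j (sf i)) *: e j.
    under eq_bigr do rewrite hcf (sum_count _ hSu (hSin _)) scaler_sumr.
    rewrite exchange_big /=; apply: eq_bigr => j _.
    rewrite scaler_suml; apply: eq_bigr => i _.
    by rewrite -scalerMnl -scalerMnr scalerA.
  by rewrite big_tnth.
move=> c hc.
pose C := fun j => \sum_(l | tnth t l == j) c l.
have hC : forall l, C (tnth t l) = c l.
  move=> l; rewrite /C (bigD1 l) //= big1 ?addr0 // => l' /andP [h1 h2].
  have tinj : injective (tnth t) by apply/tuple_uniqP.
  by move: h2; rewrite (tinj _ _ (eqP h1)) eqxx.
have h0 : \sum_(j <- S) C j *: e j = 0.
  by rewrite big_tnth; under eq_bigr do rewrite hC.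
move=> l; rewrite -hC; apply: (hind S C hSu h0); exact: mem_tnth.
Qed.

Variable m : A -> Prop.
Hypothesis hm : local_with_residue_field m.

Lemma residue_basis : spans aS m (fun _ : 'I_1 => 1) /\ indep aS m (fun _ : 'I_1 => 1).
Proof.
split.
  move=> a; have [c hc] := (let: And4 _ _ _ hr := hm in hr) a.
  by exists (fun _ => c); rewrite /lc big_ord1.
move=> ka; rewrite /lc big_ord1 => h0 i; rewrite (ord1 i).
apply/eqP; apply/negPn/negP => hn; apply: (m_not1 hm).
have := ideal_scale (m_ideal hm) (ka 0)^-1 h0.
by rewrite scalerA mulVf // scale1r.
Qed.

End Mod.

Section Main.
Variable k : fieldType.
Variable A : comAlgType k.
Variable m : A -> Prop.
Variable M : lmodType A.
Hypothesis hm : local_with_residue_field m.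
Local Notation aS := (fun c (a : A) => c *: a).

Lemma easy_dir : free_module M -> fin_gen_module M ->
  forall (n : nat) (I : A -> Prop), (0 < n)%N -> colength I n ->
      forall d r : nat, tensor_dim M I d -> tensor_dim M m r ->
        (d%:Q / n%:Q = r%:Q)%R.
Proof.
move=> hf hg n I hn [hI _ [w [ws wi]]] d r [v [vs vi]] [v' [vs' vi']].
have [R [b [hbs hbi]]] := free_fin hf hg.
have hd : d = (n * R)%N.
  have sW := tensor_spans (I:=I) hbs ws.
  have iW := tensor_indep hbs hbi hI wi.
  have := dim_unique (linset_M M I) vs vi (fun x => inspan_transport (sW x)) (indep_transport iW).
  by rewrite card_prod !card_ord.
have hr : r = (1 * R)%N.
  have [ws1 wi1] := residue_basis hm.
  have sW := tensor_spans (I:=m) hbs ws1.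
  have iW := tensor_indep hbs hbi (m_ideal hm) wi1.
  have := dim_unique (linset_M M m) vs' vi' (fun x => inspan_transport (sW x)) (indep_transport iW).
  by rewrite card_prod !card_ord.
rewrite hd hr mul1n PoszM intrM mulrAC divff ?mul1r // intr_eq0 eqz_nat -lt0n. exact: hn.
Qed.

Lemma hard_dir : noetherian A -> fin_gen_module M ->
  (forall (n : nat) (I : A -> Prop), (0 < n)%N -> colength I n ->
      forall d r : nat, tensor_dim M I d -> tensor_dim M m r ->
        (d%:Q / n%:Q = r%:Q)%R) -> free_module M.
Proof.
move=> hN [p [g hg]] hcond.
have gs : spans (@kscale k A M) (idealM m) g.
  move=> x; have [c ->] := hg x.
  have [ka hka] := choice (fun i => (let: And4 _ _ _ hr := hm in hr) (c i)).
  exists ka; rewrite /lc -sumrB; apply: idealM_sum => i _.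
  rewrite /kscale -scalerBl; exact: idealM_gen.
have [r [v [vs vi]]] := exists_basis (linset_M M m) gs.
have vspan : forall x : M, exists c, x = \sum_i c i *: v i.
  move=> x.
  pose S := fun y : M => exists c, y = \sum_i c i *: v i.
  suff : S x by [].
  apply: (@nakayama k A m hm M S (fun _ => True) _ _ _ p g) => //.
  - by exists (fun _ => 0); rewrite big1 // => i _; rewrite scale0r.
  - move=> y z [c ->] [c' ->]; exists (fun i => c i + c' i).
    by rewrite -big_split; apply: eq_bigr => i _; rewrite scalerDl.
  - move=> a y [c ->]; exists (fun i => a * c i).
    by rewrite scaler_sumr; apply: eq_bigr => i _; rewrite scalerA.
  - move=> y _; have [c ->] := hg y; exists 0, c; split; last by rewrite add0r.
    by exists (fun _ => 0); rewrite big1 // => i _; rewrite scale0r.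
  - move=> y _; have [ka [l [a [z [ha hz]]]]] := vs y.
    exists (lc (@kscale k A M) ka v), l, a, z; split=> //.
      by exists (fun i => (ka i)%:A).
    by rewrite -hz addrC subrK.
have vind : forall c, \sum_i c i *: v i = 0 -> forall i, c i = 0.
  move=> c hc i0; apply: contrapT => hne.
  have hc0 : c i0 != 0 by apply/eqP.
  have [Q [hQ hQc hQmax]] := Q_exists hN hc0.
  have [t ht] := Q_Pow hm hN hQ hQc hQmax.
  have hQ1 : ~ Q 1.
    by move=> h1; apply: hQc; rewrite -[c i0]mulr1; have [_ _ hM] := hQ; apply: hM.
  have [n [hn hcol]] := colength_of hm hN hQ ht hQ1.
  have [_ _ [w [ws wi]]] := hcol.
  have sW := tensor_spans (I:=Q) vspan ws.
  have [d [u [us ui]]] := exists_basis (linset_M M Q) sW.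
  have hrat := hcond n Q hn hcol d r (ex_intro _ u (conj us ui)) (ex_intro _ v (conj vs vi)).
  have [ka hka] := choice (fun i => ws (c i)).
  have hdep : idealM Q (lc (@kscale k A M) (fun q : 'I_n * 'I_r => ka q.2 q.1)
                          (fun q => w q.1 *: v q.2)).
    rewrite lc_tensor /= -[X in idealM Q X]subr0 -[X in idealM Q (_ - X)]hc -sumrB.
    apply: idealM_sum => i _; rewrite -scalerBl; apply: idealM_gen.
    by rewrite -opprB; apply: (ideal_opp hQ); apply: hka.
  have [a0 ha0] : exists a0, ka i0 a0 != 0.
    apply: contrapT => hall; apply: hQc.
    have := hka i0; rewrite /lc big1 ?subr0 // => a _.
    have -> : ka i0 a = 0 by apply: contrapT => hna; apply: hall; exists a; apply/eqP.
    by rewrite scale0r.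
  have hlt := dim_lt (linset_M M Q) sW hdep (j0 := (a0, i0)) ha0 ui.
  rewrite card_prod !card_ord in hlt.
  have : (d%:Q = (r * n)%N%:Q).
    by rewrite PoszM intrM -hrat mulfVK // intr_eq0 eqz_nat -lt0n.
  move/eqP; rewrite eqr_int => /eqP [hd].
  by move: hlt; rewrite hd mulnC ltnn.
exists 'I_r, v; split.
  by move=> x; have [c ->] := vspan x; exists (index_enum 'I_r), c.
move=> s c hs hsum j hj.
pose c' := fun i => if i \in s then c i else 0.
have : \sum_i c' i *: v i = 0.
  transitivity (\sum_(j0 <- s) c j0 *: v j0); last exact: hsum.
  rewrite [RHS]big_uniq // [RHS]big_mkcond; apply: eq_bigr => i _.
  by rewrite /c'; case: ifP => //; rewrite scale0r.
move/vind => /(_ j); by rewrite /c' hj.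
Qed.

End Main.

Unset Implicit Arguments.

Theorem proposition3 (k : closedFieldType) (A : comAlgType k) (m : A -> Prop)
  (M : lmodType A) :
  noetherian A -> local_with_residue_field m -> fin_gen_module M ->
  (free_module M <->
   (forall (n : nat) (I : A -> Prop), (0 < n)%N -> colength I n ->
      forall d r : nat, tensor_dim M I d -> tensor_dim M m r ->
        (d%:Q / n%:Q = r%:Q)%R)).
Proof.
move=> hN hm hg; split.
  by move=> hf; apply: easy_dir.
by move=> h; apply: (hard_dir hm hN hg h).
Qed.
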